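(* Let $m,n,p,c$ be positive integers. The number of lattice paths from $(0,0)$ to $(m-pn,m+n)$ using the steps $(1,1)$ and $(-p,1)$ in the plane that intersect the line $x=c$ equals $$\sum_{\substack{s=c\\ s\equiv c \pmod{p+1}}}^{c+\lfloor\frac{m+n-c}{p+1}\rfloor(p+1)}\frac{c}{s}\binom{s}{\frac{s-c}{p+1}}\binom{m+n-s}{n-\frac{s-c}{p+1}}.$$
   Context: A path with steps $(1,1)$ and $(-p,1)$ is regarded as the polygonal curve formed by its steps; it intersects the line $x=c$ if it touches or crosses that line. $\lfloor x\rfloor$ is the floor function. Binomial coefficients $\binom{N}{j}$ with $N\ge0$ equal $0$ when $j<0$ or $j>N$. *)

(* Defs.v *)
From mathcomp Require Import all_boot all_order all_algebra.
Set Implicit Arguments. Unset Strict Implicit. Unset Printing Implicit Defensive.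
Import Order.TTheory GRing.Theory Num.Theory.
Local Open Scope ring_scope.

(* A path with N steps is encoded as an N-tuple of booleans:
   true = step (1,1), false = step (-p,1).  Vertex k (0 <= k <= N) has
   coordinates (xpos p s k, k). *)
Definition step_x (p : nat) (b : bool) : int := if b then 1 else - (p%:Z).

Definition xpos (p : nat) (s : seq bool) (k : nat) : int :=
  \sum_(i < k) step_x p (nth false s i).

Definition path_meets_line (p : nat) (s : seq bool) (c : int) : bool :=
  [exists k : 'I_(size s).+1, xpos p s k == c] ||
  [exists k : 'I_(size s),
     ((xpos p s k <= c) && (c <= xpos p s k.+1)) ||
     ((xpos p s k.+1 <= c) && (c <= xpos p s k))].

Definition binz (N : nat) (k : int) : nat :=
  if (k < 0)%R then 0%N else 'C(N, `|k|%N).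

Definition paths_meeting (m n p c : nat) : {set (m + n).-tuple bool} :=
  [set s : (m + n).-tuple bool |
     (xpos p s (m + n) == (m%:Z - (p * n)%N%:Z)) && path_meets_line p s c%:Z].

Definition sum_upper (m n p c : nat) : int :=
  c%:Z + ((((m + n)%N%:Z - c%:Z) %/ (p.+1)%:Z)%Z * (p.+1)%:Z).

Definition rhs_sum (m n p c : nat) : rat :=
  \sum_(c <= s < `|sum_upper m n p c|%N.+1 |
          (s%:Z <= sum_upper m n p c) && (s == c %[mod p.+1]))
     ((c%:R / s%:R) * ('C(s, (s - c) %/ p.+1))%:R
       * (binz (m + n - s) (n%:Z - ((s - c) %/ p.+1)%N%:Z))%:R).

(* Main.v *)
Require Import Defs.
From mathcomp Require Import all_boot all_order all_algebra.
From mathcomp Require Import zify ring lra.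
Set Implicit Arguments. Unset Strict Implicit. Unset Printing Implicit Defensive.
Import Order.TTheory GRing.Theory Num.Theory.
Local Open Scope ring_scope.

Lemma xpos0 p s : xpos p s 0 = 0.
Proof. by rewrite /xpos big_ord0. Qed.

Lemma xposS p s k : xpos p s k.+1 = xpos p s k + step_x p (nth false s k).
Proof. by rewrite /xpos big_ord_recr. Qed.

Lemma xpos_cons p b s k : xpos p (b :: s) k.+1 = step_x p b + xpos p s k.
Proof. by rewrite /xpos big_ord_recl. Qed.

Lemma xpos_size p s :
  xpos p s (size s) = (count_mem true s)%:Z - (p * count_mem false s)%N%:Z.
Proof.
elim: s => [|b s IH]; first by rewrite /= xpos0 muln0.
rewrite /= xpos_cons IH /step_x; case: b => /=;
  move: (count_mem true s) (count_mem false s) => u f;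
  rewrite ?add0n ?add1n ?mulnS; lia.
Qed.

Lemma cnt_tf (s : seq bool) : (count_mem true s + count_mem false s = size s)%N.
Proof.
elim: s => [|b s IH] //=; move: IH; case: b => /=;
  move: (count_mem true s) (count_mem false s) => u f; lia.
Qed.

Definition nxt (p c : nat) (b : bool) : nat :=
  if c is c'.+1 then (if b then c' else c + p)%N else 0%N.

Fixpoint hitn (p c : nat) (s : seq bool) : bool :=
  if c is 0 then true else
  match s with [::] => false | b :: s' => hitn p (nxt p c b) s' end.

Lemma hitn_cons p c b s : hitn p c (b :: s) = hitn p (nxt p c b) s.
Proof. case: c => //=; by elim: s. Qed.

Lemma hitnP p c s :
  reflect (exists2 k, (k <= size s)%N & xpos p s k = c%:Z) (hitn p c s).
Proof.
elim: s c => [|b s IH] c.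
  case: c => [|c] /=; first by left; exists 0%N => //; rewrite xpos0.
  by right; case=> k; rewrite leqn0 => /eqP ->; rewrite xpos0.
case: c => [|c]; first by left; exists 0%N => //; rewrite xpos0.
rewrite hitn_cons; apply: (iffP (IH _)) => [[k Hk Hx]|[k Hk Hx]].
  exists k.+1 => //; rewrite xpos_cons Hx /step_x; move: Hx; case: b => /= Hx; lia.
case: k Hk Hx => [|k] Hk Hx; first by rewrite xpos0 in Hx.
exists k => //; rewrite xpos_cons /step_x in Hx; move: Hx; clear Hk; case: b => /= Hx; lia.
Qed.

Lemma ivt p s (c : int) k : 0 <= c -> c <= xpos p s k ->
  exists2 j, (j <= k)%N & xpos p s j = c.
Proof.
move=> c0; elim: k => [|k IH].
  rewrite xpos0 => H; exists 0%N => //; rewrite xpos0; lia.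
have [E|E] := eqVneq (xpos p s k.+1) c; first by move=> _; exists k.+1.
move=> H; have [|j Hj Hx] := IH.
  move: E H; rewrite xposS /step_x; case: (nth false s k) => /=; lia.
by exists j => //; apply: leqW.
Qed.

Lemma meets_hit p c s : path_meets_line p s c%:Z = hitn p c s.
Proof.
apply/idP/idP.
  case/orP.
    case/existsP => k /eqP H; apply/hitnP; exists k => //; by rewrite -ltnS ltn_ord.
  case/existsP => k /orP [/andP [_ H]|/andP [_ H]].
    have [j Hj Hx] := ivt (le0z_nat c) H.
    by apply/hitnP; exists j => //; exact: leq_trans Hj (ltn_ord k).
  have [j Hj Hx] := ivt (le0z_nat c) H.
  by apply/hitnP; exists j => //; exact: leq_trans Hj (ltnW (ltn_ord k)).
case/hitnP => k Hk Hx; apply/orP; left; apply/existsP.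
by exists (Ordinal (n:=(size s).+1) (m:=k) Hk); rewrite /= Hx.
Qed.

Lemma card_cons L (P : seq bool -> bool) :
  #|[set t : L.+1.-tuple bool | P t]| =
  (#|[set t : L.-tuple bool | P (true :: t)]| +
   #|[set t : L.-tuple bool | P (false :: t)]|)%N.
Proof.
have E b : #|[set t : L.-tuple bool | P (b :: t)]| =
           #|[set t : L.+1.-tuple bool | P t && (thead t == b)]|.
  rewrite -(card_imset _ (f := fun t : L.-tuple bool => [tuple of b :: t])).
    apply: eq_card => t; rewrite inE; apply/imsetP/idP.
      by case=> u; rewrite inE => Hu ->; rewrite theadE eqxx andbT.
    case/andP=> Ht /eqP Hb; exists [tuple of behead t]; last first.
      by rewrite {1}(tuple_eta t) Hb.
    by rewrite inE; move: Ht; rewrite {1}(tuple_eta t) Hb.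
  by move=> u v /(congr1 val) [] /val_inj.
rewrite !E -(cardsID [set t : L.+1.-tuple bool | thead t]); congr (_ + _)%N.
  by apply: eq_card => t; rewrite !inE eqb_id.
by apply: eq_card => t; rewrite !inE eqbF_neg andbC.
Qed.

Fixpoint cnt (p L c n : nat) : nat :=
  match L with
  | 0 => ((c == 0) && (n == 0))%N
  | L'.+1 => (cnt p L' (nxt p c true) n +
              (if n is n'.+1 then cnt p L' (nxt p c false) n' else 0))%N
  end.

Lemma cnt_card p L c n :
  cnt p L c n = #|[set t : L.-tuple bool | hitn p c t && (count_mem false t == n)]|.
Proof.
elim: L c n => [|L IH] c n.
  rewrite /=; case E: ((c == 0) && (n == 0))%N.
    case/andP: E => /eqP -> /eqP ->.
    rewrite (_ : [set t : 0.-tuple bool | _] = setT) ?cardsT ?card_tuple //.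
    by apply/setP => t; rewrite !inE tuple0.
  rewrite (_ : [set t : 0.-tuple bool | _] = set0) ?cards0 //.
  apply/setP => t; rewrite !inE tuple0 /=.
  by move: E; case: c => [|c] //=; case: n.
rewrite /= IH (@card_cons _ (fun s => hitn p c s && (count_mem false s == n))); congr (_ + _)%N.
  by apply: eq_card => t; rewrite !inE hitn_cons /= add0n.
case: n => [|n].
  by rewrite (_ : [set t : L.-tuple bool | _] = set0) ?cards0 //;
     apply/setP => t; rewrite !inE /= add1n andbF.
by rewrite IH; apply: eq_card => t; rewrite !inE hitn_cons /= add1n eqSS.
Qed.

Lemma cnt_0 p L n : cnt p L 0 n = 'C(L, n).
Proof.
elim: L n => [|L IH] n; first by case: n.
rewrite /= !IH; case: n => [|n]; first by rewrite addn0 !bin0.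
by rewrite IH binS.
Qed.

Definition acoef (p c k : nat) : rat :=
  if k is k'.+1 then
    ('C(c + k * p.+1, k))%:R - (p.+1)%:R * ('C((c + k * p.+1).-1, k'))%:R
  else 1.

Lemma acoef0 p k : acoef p 0 k.+1 = 0.
Proof.
rewrite /acoef add0n.
have H : (p.+1 * 'C((k.+1 * p.+1).-1, k) = 'C(k.+1 * p.+1, k.+1))%N.
  apply/eqP; rewrite -(eqn_pmul2l (ltn0Sn k)) mulnA -mul_bin_diag.
  by rewrite mulnC.
by rewrite -natrM H subrr.
Qed.

Lemma acoefS p c k :
  acoef p c.+1 k.+1 = acoef p c k.+1 + acoef p (c.+1 + p) k.
Proof.
rewrite /acoef.
have HS : (c + k.+1 * p.+1)%N = (c + k * p.+1 + p).+1 by rewrite mulSn; lia.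
move: (c + k * p.+1 + p)%N HS => S HS.
have ->: (c.+1 + k.+1 * p.+1 = S.+2)%N by rewrite addSn HS.
rewrite HS.
case: k HS => [|k] HS.
  rewrite /= !bin1 !bin0 -[S.+2]addn1 -[S.+1]addn1 !natrD; ring.
have ->: (c.+1 + p + k.+1 * p.+1 = S.+1)%N by rewrite -HS mulSn (mulSn k.+1); lia.
rewrite /= (binS S.+1 k.+1) (binS S k) !natrD; ring.
Qed.

Definition Tt (p L c n k : nat) : rat :=
  if (c + k * p.+1 <= L)%N then
    acoef p c k * (if (k <= n)%N then ('C(L - (c + k * p.+1), n - k))%:R else 0)
  else 0.

Lemma T_split p L c n k :
  Tt p L.+1 c.+1 n k = Tt p L c n k +
    (if k is k'.+1 then (if n is n'.+1 then Tt p L (c.+1 + p) n' k' else 0) else 0).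
Proof.
case: k => [|k].
  by rewrite /Tt /= !mul0n !addn0 addr0 ltnS subSS.
rewrite /Tt acoefS.
have ->: (c.+1 + k.+1 * p.+1 = (c + k.+1 * p.+1).+1)%N by rewrite addSn.
rewrite ltnS subSS; case: n => [|n].
  by case: ifP => _; rewrite ?mulr0 ?addr0.
have ->: (c.+1 + p + k * p.+1 = c + k.+1 * p.+1)%N by rewrite mulSn; lia.
rewrite ltnS subSS; case: ifP => _; last by rewrite addr0.
by rewrite mulrDl.
Qed.

Lemma cnt_closed p L c n :
  (cnt p L c n)%:R = \sum_(k < L.+1) Tt p L c n k.
Proof.
elim: L c n => [|L IH] c n.
  case: c => [|c].
    by rewrite big_ord1 /Tt /= ?mul0n; case: n.
  by rewrite big_ord1 /Tt /= ?mul0n.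
case: c => [|c].
  rewrite cnt_0 big_ord_recl {1}/Tt mul0n addn0 subn0 !leq0n mul1r subn0.
  rewrite big1 ?addr0 // => i _; rewrite /Tt lift0 acoef0 mul0r; by case: ifP.
rewrite /= natrD IH.
under eq_bigr => k _ do rewrite T_split.
rewrite big_split [in RHS](big_ord_recr L.+1).
rewrite [X in _ = _ + X + _]/Tt ifF ?addr0; last first.
  by apply/negbTE; rewrite -ltnNge /=; nia.
congr (_ + _).
case: n => [|n]; first by rewrite big1 // => i _; case: (nat_of_ord i).
rewrite IH [RHS]big_ord_recl /= add0r.
by apply: eq_bigr => i _.
Qed.

Lemma sum_dvd (H : nat -> rat) q K : (0 < q)%N ->
  \sum_(0 <= t < K * q + 1 | (q %| t)%N) H t = \sum_(k < K.+1) H (k * q)%N.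
Proof.
case: q => [|q] // _.
elim: K => [|K IH].
  by rewrite mul0n add0n big_mkcond big_nat1 dvdn0 big_ord1 mul0n.
rewrite (@big_cat_nat _ _ _ (K * q.+1 + 1)%N) /=; last 2 first.
- by [].
- by rewrite leq_add2r leq_mul2r ltnW ?orbT.
rewrite IH [in RHS]big_ord_recr /=; congr (_ + _).
have ->: (K.+1 * q.+1 + 1 = (K * q.+1 + 1 + q).+1)%N by rewrite mulSn; lia.
rewrite big_mkcond big_nat_recr /=; last by rewrite leq_addr.
rewrite big_nat_cond big1 ?add0r; last first.
  move=> t /andP [/andP [H1 H2] _]; case: ifP => // Hd.
  have Hr : (q.+1 %| (t - K * q.+1))%N.
    by rewrite dvdn_subr ?Hd ?dvdn_mull // ; lia.
  have := dvdn_leq _ Hr; lia.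
have ->: (K * q.+1 + 1 + q = K.+1 * q.+1)%N by rewrite mulSn; lia.
by rewrite dvdn_mull.
Qed.

Lemma acoef_pos p c k : (0 < c)%N ->
  acoef p c k = c%:R / (c + k * p.+1)%N%:R * ('C(c + k * p.+1, k))%:R.
Proof.
move=> c0; case: k => [|k].
  by rewrite /acoef mul0n addn0 bin0 mulr1 divff // pnatr_eq0 -lt0n.
rewrite /acoef.
set s := (c + k.+1 * p.+1)%N.
have s0 : (s%:R : rat) != 0 by rewrite pnatr_eq0 /s; lia.
have HD : (('C(s.-1, k))%:R : rat) = k.+1%:R * ('C(s, k.+1))%:R / s%:R.
  apply: (mulIf s0); rewrite mulfVK // -!natrM; congr (_%:R).
  by rewrite -mul_bin_diag mulnC.
have Hs : (s%:R : rat) = c%:R + k.+1%:R * p.+1%:R by rewrite /s natrD natrM.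
rewrite HD; move: s0; rewrite Hs => s0; field; by rewrite !(addrC 1) !natr1 -natrM -natrD pnatr_eq0; lia.
Qed.

Lemma lhs_eq m n p c :
  #|paths_meeting m n p c| = cnt p (m + n) c n.
Proof.
rewrite cnt_card; apply: eq_card => t; rewrite !inE meets_hit andbC; congr (_ && _).
have := xpos_size p t; rewrite size_tuple => ->.
have := cnt_tf t; rewrite size_tuple.
move: (count_mem true t) (count_mem false t) => u f H.
apply/eqP/eqP; nia.
Qed.

Lemma reindex (G : nat -> rat) c q K : (0 < q)%N ->
  \sum_(c <= s < (c + K * q).+1 |
        (s%:Z <= (c + K * q)%N%:Z) && (s == c %[mod q])) G s =
  \sum_(k < K.+1) G (c + k * q)%N.
Proof.
move=> q0.
rewrite (big_addn 0 _ c).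
have -> : ((c + K * q).+1 - c = K * q + 1)%N by lia.
rewrite (eq_bigr (fun k : 'I_K.+1 => G (k * q + c)%N)); last first.
  by move=> k _; rewrite addnC.
rewrite -(sum_dvd (fun t => G (t + c)%N)) //.
rewrite big_nat_cond [RHS]big_nat_cond; apply: eq_bigl => t.
case: (boolP (0 <= t < K * q + 1)%N) => //= Ht.
rewrite lez_nat (_ : (t + c <= c + K * q)%N = true); last by lia.
by rewrite /= -{2}(add0n c) eqn_modDr mod0n.
Qed.

Lemma sum_upper_le m n p c : sum_upper m n p c <= (m + n)%N%:Z.
Proof.
rewrite /sum_upper.
set x := ((m + n)%N%:Z - c%:Z).
have H1 := divz_eq x (p.+1)%:Z.
have H2 := @modz_ge0 x (p.+1)%:Z isT.
move: H1 H2; rewrite /x.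
move: ((((m + n)%N%:Z - c%:Z) %/ (p.+1)%:Z)%Z * (p.+1)%:Z)
      ((((m + n)%N%:Z - c%:Z) %% (p.+1)%:Z)%Z) => A B.
lia.
Qed.

Unset Implicit Arguments.
Set Strict Implicit.

Theorem corollary3p1 (m n p c : nat) (hm : (0 < m)%N) (hn : (0 < n)%N)
  (hp : (0 < p)%N) (hc : (0 < c)%N) :
  (#|paths_meeting m n p c|%:R : rat) = rhs_sum m n p c.
Proof.
rewrite lhs_eq cnt_closed /rhs_sum.
have q0 : (0 < p.+1)%N by [].
case: (leqP c (m + n)) => HcL.
  set K := (((m + n) - c) %/ p.+1)%N.
  have HK : (K * p.+1 <= m + n - c)%N by apply: leq_divM.
  have Hsu : sum_upper m n p c = (c + K * p.+1)%N%:Z.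
    by rewrite /sum_upper subzn // divz_nat PoszD PoszM.
  rewrite Hsu absz_nat reindex //.
  rewrite (bigID (fun k : 'I_(m + n).+1 => (k < K.+1)%N)) /=.
  rewrite [X in _ + X = _]big1 ?addr0; last first.
    move=> k; rewrite -leqNgt => Hk; rewrite /Tt ifF //; apply/negbTE.
    rewrite -ltnNge.
    have := ltn_ceil (m + n - c) q0; rewrite -/K.
    have : (K.+1 * p.+1 <= k * p.+1)%N by rewrite leq_mul2r Hk orbT.
    lia.
  rewrite -big_ord_widen; last by nia.
  apply: eq_bigr => k _.
  have Hk : (c + k * p.+1 <= m + n)%N.
    have : (k * p.+1 <= K * p.+1)%N by rewrite leq_mul2r -ltnS ltn_ord orbT.
    lia.
  rewrite /Tt Hk acoef_pos // addKn mulnK //.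
  congr (_ * _); rewrite /binz.
  case: (leqP k n) => Hkn.
    by rewrite subzn // absz_nat.
  by rewrite ifT // subr_lt0 ltz_nat.
rewrite big1; last first.
  move=> k _; rewrite /Tt ifF //; apply/negbTE; rewrite -ltnNge; lia.
rewrite big_nat_cond big1 // => s /andP [/andP [Hcs _] /andP [Hs _]].
have := sum_upper_le m n p c.
move: Hs; move: (sum_upper m n p c) => U; rewrite -lez_nat in Hcs.
move: Hcs; rewrite -ltz_nat in HcL; move: HcL.
move: (s%:Z) (c%:Z) ((m + n)%N%:Z) => a b d.
lia.
Qed.
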